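(* Let $K$ be an algebraically closed field complete with respect to a non-archimedean absolute value $|\cdot|$, with valuation ring $\mathcal{O}$, maximal ideal $\mathfrak{m}$, residue field $k$, and let $\varphi\in K(z)$ have degree two with three distinct fixed points in $\mathbb{P}^1(K)$, with multipliers $\lambda_1,\lambda_2,\lambda_3$. Then the fixed points are not all repelling. Moreover: (A) if $\varphi$ has two repelling fixed points, the third is attracting; (B) if $\varphi$ has exactly one repelling fixed point, the other two are indifferent; (C) if $\varphi$ has no repelling fixed points, then either some pair $i\ne j$ satisfies $\tilde\lambda_i\tilde\lambda_j\ne\tilde1$, or $\tilde\lambda_1=\tilde\lambda_2=\tilde\lambda_3=\tilde1$.
   Context: A fixed point with multiplier $\lambda$ is attracting if $|\lambda|<1$, indifferent if $|\lambda|=1$, repelling if $|\lambda|>1$. For $x\in\mathcal{O}$, $\tilde x$ denotes its image in $k=\mathcal{O}/\mathfrak{m}$. *)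

(* Defs.v *)
From HB Require Import structures.
From mathcomp Require Import all_boot all_order all_algebra.
From mathcomp Require Import reals.
Set Implicit Arguments. Unset Strict Implicit. Unset Printing Implicit Defensive.
Import Order.TTheory GRing.Theory Num.Theory.
Local Open Scope ring_scope.

Section Defs.
Variables (R : realType) (K : fieldType).

Definition nonarch_abs (abs : K -> R) : Prop :=
  [/\ forall x, 0 <= abs x,
      forall x, (abs x == 0) = (x == 0),
      forall x y, abs (x * y) = abs x * abs y
    & forall x y, abs (x + y) <= Num.max (abs x) (abs y)].

Definition abs_complete (abs : K -> R) : Prop :=
  forall u : nat -> K,
    (forall e : R, 0 < e -> exists N, forall m n, (N <= m)%N -> (N <= n)%N ->
        abs (u m - u n) < e) ->
    exists l : K, forall e : R, 0 < e -> exists N, forall n, (N <= n)%N ->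
        abs (u n - l) < e.

(* phi = p / q, a rational map of degree two (p, q coprime, max degree 2). *)
Definition rat_degree2 (p q : {poly K}) : Prop :=
  coprimep p q /\ maxn (size p) (size q) = 3%N.

(* Points of P^1(K): Some a = a in K, None = infinity. *)
Definition is_fixed (p q : {poly K}) (x : option K) : Prop :=
  match x with
  | Some a => q.[a] != 0 /\ p.[a] = a * q.[a]
  | None => (size q < size p)%N   (* phi(oo) = oo iff deg p > deg q *)
  end.

Definition rat_deriv_at (p q : {poly K}) (a : K) : K :=
  (p^`().[a] * q.[a] - p.[a] * q^`().[a]) / (q.[a] ^+ 2).

(* w^2 p(1/w), for deg p <= 2 *)
Definition recip2 (p : {poly K}) : {poly K} := \poly_(i < 3) p`_(2 - i).

(* Multiplier of phi = p/q at a fixed point x; at infinity it is computed in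
   the chart w = 1/z, i.e. the derivative at 0 of 1/phi(1/w) = recip2 q / recip2 p. *)
Definition multiplier (p q : {poly K}) (x : option K) : K :=
  match x with
  | Some a => rat_deriv_at p q a
  | None => rat_deriv_at (recip2 q) (recip2 p) 0
  end.

Definition attracting (abs : K -> R) (l : K) : Prop := abs l < 1.
Definition indifferent (abs : K -> R) (l : K) : Prop := abs l = 1.
Definition repelling (abs : K -> R) (l : K) : Prop := 1 < abs l.

(* For x, y in O, reduction equality  x~ = y~  in k = O/m  means x - y in m. *)
Definition res_eq (abs : K -> R) (x y : K) : Prop := abs (x - y) < 1.

End Defs.

(* Main.v *)
From HB Require Import structures.
From mathcomp Require Import all_boot all_order all_algebra.
From mathcomp Require Import reals ring lra.
Require Import Defs.
Set Implicit Arguments. Unset Strict Implicit. Unset Printing Implicit Defensive.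
Import Order.TTheory GRing.Theory Num.Theory.
Local Open Scope ring_scope.

Section P.
Variable K : fieldType.

Lemma hornr3 (p : {poly K}) x : (size p <= 3)%N ->
  p.[x] = p`_0 + p`_1 * x + p`_2 * x^+2.
Proof.
move=> h; rewrite (horner_coef_wide x h) !big_ord_recr big_ord0 /=.
by rewrite add0r expr0 mulr1 expr1.
Qed.

Lemma hornd3 (p : {poly K}) x : (size p <= 3)%N ->
  p^`().[x] = p`_1 + p`_2 *+ 2 * x.
Proof.
move=> h.
have hs : (size p^`() <= 3)%N.
  by apply: leq_trans (size_poly _ _) _; apply: leq_trans (leq_pred _) h.
rewrite (hornr3 x hs) !coef_deriv.
have -> : p`_3 = 0 by rewrite nth_default.
by rewrite mul0rn mul0r addr0.
Qed.

Lemma size2 (p : {poly K}) : (size p <= 3)%N -> p`_2 = 0 -> (size p <= 2)%N.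
Proof.
move=> h h2; rewrite leqNgt; apply/negP => h3.
have e : size p = 3%N by apply/eqP; rewrite eqn_leq h h3.
have : lead_coef p != 0 by rewrite lead_coef_eq0 -size_poly_eq0 e.
by rewrite lead_coefE e h2 eqxx.
Qed.

Definition relK (x y z : K) := x * y * z - (x + y + z) + 2 = 0.

Lemma vieta3 (c3 c2 c1 c0 a b d : K) : a != b -> a != d -> b != d ->
  c3 * a^+3 + c2 * a^+2 + c1 * a + c0 = 0 ->
  c3 * b^+3 + c2 * b^+2 + c1 * b + c0 = 0 ->
  c3 * d^+3 + c2 * d^+2 + c1 * d + c0 = 0 ->
  [/\ c2 = - c3 * (a + b + d), c1 = c3 * (a*b + a*d + b*d) & c0 = - c3 * (a*b*d)].
Proof.
move=> hab had hbd Fa Fb Fd.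
have Eab : c3*(a^+2+a*b+b^+2) + c2*(a+b) + c1 = 0.
  have h : (a - b) * (c3*(a^+2+a*b+b^+2) + c2*(a+b) + c1) =
    (c3 * a^+3 + c2 * a^+2 + c1 * a + c0) - (c3 * b^+3 + c2 * b^+2 + c1 * b + c0) by ring.
  move: h; rewrite Fa Fb subrr => /eqP; rewrite mulf_eq0 subr_eq0 (negbTE hab) /=.
  by move/eqP.
have Ead : c3*(a^+2+a*d+d^+2) + c2*(a+d) + c1 = 0.
  have h : (a - d) * (c3*(a^+2+a*d+d^+2) + c2*(a+d) + c1) =
    (c3 * a^+3 + c2 * a^+2 + c1 * a + c0) - (c3 * d^+3 + c2 * d^+2 + c1 * d + c0) by ring.
  move: h; rewrite Fa Fd subrr => /eqP; rewrite mulf_eq0 subr_eq0 (negbTE had) /=.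
  by move/eqP.
have E2 : c2 + c3 * (a + b + d) = 0.
  have h : (b - d) * (c2 + c3 * (a + b + d)) =
    (c3*(a^+2+a*b+b^+2) + c2*(a+b) + c1) - (c3*(a^+2+a*d+d^+2) + c2*(a+d) + c1) by ring.
  move: h; rewrite Eab Ead subrr => /eqP; rewrite mulf_eq0 subr_eq0 (negbTE hbd) /=.
  by move/eqP.
have e2 : c2 = - c3 * (a + b + d).
  by apply/eqP; rewrite -subr_eq0 -E2; apply/eqP; ring.
have e1 : c1 = c3 * (a*b + a*d + b*d).
  apply/eqP; rewrite -subr_eq0 -Eab e2; apply/eqP; ring.
split => //.
by apply/eqP; rewrite -subr_eq0 -Fa e2 e1; apply/eqP; ring.
Qed.

Lemma vieta2 (c2 c1 c0 a b : K) : a != b ->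
  c2 * a^+2 + c1 * a + c0 = 0 ->
  c2 * b^+2 + c1 * b + c0 = 0 ->
  c1 = - c2 * (a + b) /\ c0 = c2 * (a * b).
Proof.
move=> hab Fa Fb.
have E : c2*(a+b) + c1 = 0.
  have h : (a - b) * (c2*(a+b) + c1) =
    (c2 * a^+2 + c1 * a + c0) - (c2 * b^+2 + c1 * b + c0) by ring.
  move: h; rewrite Fa Fb subrr => /eqP; rewrite mulf_eq0 subr_eq0 (negbTE hab) /=.
  by move/eqP.
have e1 : c1 = - c2 * (a + b) by apply/eqP; rewrite -subr_eq0 -E; apply/eqP; ring.
split => //.
by apply/eqP; rewrite -subr_eq0 -Fa e1; apply/eqP; ring.
Qed.

Lemma lam_fin (p q : {poly K}) a : (size p <= 3)%N -> (size q <= 3)%N ->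
  is_fixed p q (Some a) ->
  [/\ q`_0 + q`_1 * a + q`_2 * a^+2 != 0,
      (- q`_2) * a^+3 + (p`_2 - q`_1) * a^+2 + (p`_1 - q`_0) * a + p`_0 = 0 &
      rat_deriv_at p q a = 1 + ((- q`_2) * 3%:R * a^+2 + (p`_2 - q`_1) * 2%:R * a + (p`_1 - q`_0))
                             / (q`_0 + q`_1 * a + q`_2 * a^+2)].
Proof.
move=> hp hq [nz e].
have nz' := nz; rewrite (hornr3 a hq) in nz'.
split => //.
  have h : (- q`_2) * a^+3 + (p`_2 - q`_1) * a^+2 + (p`_1 - q`_0) * a + p`_0
     = p.[a] - a * q.[a] by rewrite (hornr3 a hp) (hornr3 a hq); ring.
  by rewrite h e subrr.
rewrite /rat_deriv_at e (hornd3 a hp) (hornd3 a hq) (hornr3 a hq).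
by field.
Qed.

Lemma rel_fin (p q : {poly K}) a b d : (size p <= 3)%N -> (size q <= 3)%N ->
  a != b -> a != d -> b != d ->
  is_fixed p q (Some a) -> is_fixed p q (Some b) -> is_fixed p q (Some d) ->
  relK (rat_deriv_at p q a) (rat_deriv_at p q b) (rat_deriv_at p q d).
Proof.
move=> hp hq hab had hbd fa fb fd.
case: (lam_fin hp hq fa) => nza Fa ->.
case: (lam_fin hp hq fb) => nzb Fb ->.
case: (lam_fin hp hq fd) => nzd Fd ->.
case: (vieta3 hab had hbd Fa Fb Fd) => e2 e1 e0.
have ep2 : p`_2 = q`_1 + - - q`_2 * (a + b + d) by rewrite -e2; ring.
have ep1 : p`_1 = q`_0 + - q`_2 * (a * b + a * d + b * d) by rewrite -e1; ring.
rewrite /relK ep2 ep1.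
by field; rewrite nza nzb nzd.
Qed.

Lemma lam_inf (p q : {poly K}) :
  multiplier p q None = (q`_1 * p`_2 - q`_2 * p`_1) / p`_2 ^+ 2.
Proof.
by rewrite /multiplier /rat_deriv_at !horner_coef0 !coef_deriv /recip2 !coef_poly /= mulr1n.
Qed.

Lemma rel_inf (p q : {poly K}) a b : rat_degree2 p q -> a != b ->
  is_fixed p q (Some a) -> is_fixed p q (Some b) -> is_fixed p q None ->
  relK (rat_deriv_at p q a) (rat_deriv_at p q b) (multiplier p q None).
Proof.
move=> [_ hm] hab fa fb hlt; rewrite /= in hlt.
have hp : (size p <= 3)%N by rewrite -hm leq_maxl.
have hq : (size q <= 3)%N by rewrite -hm leq_maxr.
have hq2 : (size q <= 2)%N by rewrite -ltnS; apply: leq_trans hlt hp.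
have q20 : q`_2 = 0 by rewrite nth_default.
have p2n : p`_2 != 0.
  apply/eqP => p20; have := size2 hp p20 => hp2.
  move: hm; have : (maxn (size p) (size q) <= 2)%N.
    by rewrite geq_max hp2 -ltnS; apply: leq_trans hlt _.
  by move=> h e; rewrite e in h.
case: (lam_fin hp hq fa) => nza Fa ->.
case: (lam_fin hp hq fb) => nzb Fb ->.
rewrite q20 in nza nzb Fa Fb.
have Fa' : (p`_2 - q`_1) * a^+2 + (p`_1 - q`_0) * a + p`_0 = 0 by rewrite -[RHS]Fa; ring.
have Fb' : (p`_2 - q`_1) * b^+2 + (p`_1 - q`_0) * b + p`_0 = 0 by rewrite -[RHS]Fb; ring.
case: (vieta2 hab Fa' Fb') => e1 e0.
have ep1 : p`_1 = q`_0 + - (p`_2 - q`_1) * (a + b) by rewrite -e1; ring.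
rewrite /relK lam_inf q20 ep1.
field; rewrite p2n; rewrite !mul0r !addr0 in nza nzb; by rewrite nza nzb.
Qed.

End P.

Section Abs.
Variables (R : realType) (K : fieldType) (abs : K -> R).
Hypothesis Habs : nonarch_abs abs.

Lemma ab0 x : 0 <= abs x. Proof. by case: Habs. Qed.
Lemma abM x y : abs (x * y) = abs x * abs y. Proof. by case: Habs. Qed.
Lemma abU x y : abs (x + y) <= Num.max (abs x) (abs y). Proof. by case: Habs. Qed.
Lemma ab1 : abs 1 = 1.
Proof.
have h1 : abs 1 != 0 by case: Habs => _ -> _ _; rewrite oner_eq0.
have h := abM 1 1; rewrite mulr1 in h.
have : abs 1 * (abs 1 - 1) = 0 by rewrite mulrBr mulr1 -h subrr.
by move/eqP; rewrite mulf_eq0 (negbTE h1) subr_eq0 /= => /eqP.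
Qed.
Lemma abN x : abs (- x) = abs x.
Proof.
have hm1 : abs (-1) = 1.
  have h := abM (-1) (-1); rewrite mulrNN mulr1 ab1 in h.
  have := ab0 (-1); nra.
by rewrite -mulN1r abM hm1 mul1r.
Qed.
Lemma abD_le x y z : abs x <= z -> abs y <= z -> abs (x + y) <= z.
Proof. by move=> h1 h2; apply: le_trans (abU x y) _; rewrite ge_max h1 h2. Qed.
Lemma abD_lt x y z : abs x < z -> abs y < z -> abs (x + y) < z.
Proof. by move=> h1 h2; apply: le_lt_trans (abU x y) _; rewrite gt_max h1 h2. Qed.
Lemma ultra x y : abs y < abs x -> abs (x + y) = abs x.
Proof.
move=> h; apply/eqP; rewrite eq_le (abD_le (lexx _) (ltW h)) /=.
rewrite leNgt; apply/negP => h2.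
have := abD_lt h2 (_ : abs (- y) < abs x); rewrite addrK ltxx abN.
by move=> /(_ h).
Qed.
Lemma ab2 : abs 2 <= 1.
Proof. by rewrite -[2]/(1 + 1) ; apply: abD_le; rewrite ab1. Qed.

Lemma partA l1 l2 l3 : relK l1 l2 l3 -> 1 < abs l1 -> 1 < abs l2 -> abs l3 < 1.
Proof.
move=> r h1 h2.
have e : l3 * (l1 * l2 - 1) = l1 + l2 + - 2.
  apply/eqP; rewrite -subr_eq0; apply/eqP; rewrite -[RHS]r; ring.
have P1 : 1 < abs l1 * abs l2 by nra.
have a12 : abs (l1 * l2 - 1) = abs l1 * abs l2.
  by rewrite ultra abM // abN ab1.
have lt : abs (l1 + l2 + - 2) < abs l1 * abs l2.
  apply: abD_lt; first apply: abD_lt; try nra.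
  rewrite abN; apply: le_lt_trans ab2 P1.
move: lt; rewrite -e abM a12 => lt.
have := ab0 l3; nra.
Qed.

Lemma partB l1 l2 l3 : relK l1 l2 l3 -> 1 < abs l1 -> abs l2 <= 1 -> abs l3 <= 1 ->
  abs l2 = 1.
Proof.
move=> r h1 h2 h3.
apply/eqP; rewrite eq_le h2 /= leNgt; apply/negP => h2'.
have e : l1 * (l2 * l3 - 1) = l2 + l3 + - 2.
  apply/eqP; rewrite -subr_eq0; apply/eqP; rewrite -[RHS]r; ring.
have a23 : abs (l2 * l3 - 1) = 1.
  rewrite addrC ultra abN ab1 // abM; have := ab0 l2; have := ab0 l3; nra.
have le : abs (l2 + l3 + - 2) <= 1.
  by apply: abD_le; first apply: abD_le => //; rewrite abN ab2.
move: le; rewrite -e abM a23 mulr1 => le; lra.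
Qed.

Lemma partC l1 l2 l3 : relK l1 l2 l3 -> abs l1 <= 1 -> abs l2 <= 1 -> abs l3 <= 1 ->
  abs (l1 * l2 - 1) < 1 -> abs (l1 * l3 - 1) < 1 -> abs (l2 * l3 - 1) < 1 ->
  [/\ abs (l1 - 1) < 1, abs (l2 - 1) < 1 & abs (l3 - 1) < 1].
Proof.
move=> r h1 h2 h3 e12 e13 e23.
have unit : forall x y, abs x <= 1 -> abs y <= 1 -> abs (x * y - 1) < 1 -> abs x = 1 /\ abs y = 1.
  move=> x y hx hy hxy.
  have hxy1 : abs (x * y) = 1.
    apply/eqP; rewrite eq_le; apply/andP; split.
      by rewrite abM; have := ab0 x; have := ab0 y; nra.
    rewrite leNgt; apply/negP => hl.
    by move: hxy; rewrite addrC ultra abN ab1 ?ltxx.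
  move: hxy1; rewrite abM => hxy1; have := ab0 x; have := ab0 y; split; nra.
case: (unit _ _ h1 h2 e12) => u1 u2.
case: (unit _ _ h1 h3 e13) => _ u3.
have d23 : abs (l2 - l3) < 1.
  have : l1 * (l2 - l3) = (l1 * l2 - 1) + - (l1 * l3 - 1) by ring.
  by move=> e; have := abD_lt e12 (_ : abs (- (l1 * l3 - 1)) < 1); rewrite -e abM u1 mul1r abN; apply.
have d13 : abs (l1 - l3) < 1.
  have : l2 * (l1 - l3) = (l1 * l2 - 1) + - (l2 * l3 - 1) by ring.
  by move=> e; have := abD_lt e12 (_ : abs (- (l2 * l3 - 1)) < 1); rewrite -e abM u2 mul1r abN; apply.
have d12 : abs (l1 - l2) < 1.
  have : l3 * (l1 - l2) = (l1 * l3 - 1) + - (l2 * l3 - 1) by ring.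
  by move=> e; have := abD_lt e13 (_ : abs (- (l2 * l3 - 1)) < 1); rewrite -e abM u3 mul1r abN; apply.
have t2 : abs (2 * (l1 - 1)) < 1.
  have : 2 * (l1 - 1) = l3 * (l1 * l2 - 1) + (l1 - l2).
    apply/eqP; rewrite -subr_eq0 -oppr_eq0; apply/eqP; rewrite -[RHS]r; ring.
  move=> ->; apply: abD_lt => //; rewrite abM u3 mul1r //.
have t3 : abs ((l1 - 1) * (l1 + 1)) < 1.
  have -> : (l1 - 1) * (l1 + 1) = l1 * (l1 - l2) + (l1 * l2 - 1) by ring.
  by apply: abD_lt => //; rewrite abM u1 mul1r.
have c1 : abs (l1 - 1) < 1.
  rewrite ltNge; apply/negP => g.
  have g1 : abs (l1 - 1) = 1.
    apply/eqP; rewrite eq_le g andbT; apply: abD_le => //; by rewrite abN ab1.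
  move: t2 t3; rewrite !abM g1 ?mulr1 ?mul1r => t2 t3.
  have : l1 - 1 = (l1 + 1) + - 2 by ring.
  move=> e; have := abD_lt t3 (_ : abs (-2) < 1); rewrite -e g1 ltxx abN; by move/(_ t2).
split => //.
  have -> : l2 - 1 = - (l1 - l2) + (l1 - 1) by ring.
  by apply: abD_lt; rewrite ?abN.
have -> : l3 - 1 = - (l1 - l3) + (l1 - 1) by ring.
by apply: abD_lt; rewrite ?abN.
Qed.

End Abs.

Lemma relK_12 (K : fieldType) (x y z : K) : relK x y z -> relK y x z.
Proof. by rewrite /relK => h; rewrite -[RHS]h; ring. Qed.
Lemma relK_23 (K : fieldType) (x y z : K) : relK x y z -> relK x z y.
Proof. by rewrite /relK => h; rewrite -[RHS]h; ring. Qed.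

Lemma key (R : realType) (K : fieldType) (abs : K -> R) (Habs : nonarch_abs abs)
  (l1 l2 l3 : K) : relK l1 l2 l3 ->
  ~ (repelling abs l1 /\ repelling abs l2 /\ repelling abs l3)
  /\
  ((repelling abs l1 /\ repelling abs l2 -> attracting abs l3) /\
   (repelling abs l1 /\ repelling abs l3 -> attracting abs l2) /\
   (repelling abs l2 /\ repelling abs l3 -> attracting abs l1))
  /\
  ((repelling abs l1 /\ ~ repelling abs l2 /\ ~ repelling abs l3 ->
      indifferent abs l2 /\ indifferent abs l3) /\
   (~ repelling abs l1 /\ repelling abs l2 /\ ~ repelling abs l3 ->
      indifferent abs l1 /\ indifferent abs l3) /\
   (~ repelling abs l1 /\ ~ repelling abs l2 /\ repelling abs l3 ->
      indifferent abs l1 /\ indifferent abs l2))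
  /\
  (~ repelling abs l1 /\ ~ repelling abs l2 /\ ~ repelling abs l3 ->
     (~ res_eq abs (l1 * l2) 1 \/ ~ res_eq abs (l1 * l3) 1 \/
      ~ res_eq abs (l2 * l3) 1)
     \/ (res_eq abs l1 1 /\ res_eq abs l2 1 /\ res_eq abs l3 1)).
Proof.
move=> r.
have r213 := relK_12 r. have r132 := relK_23 r.
have r231 := relK_23 r213. have r312 := relK_12 r132. have r321 := relK_12 r231.
have nr : forall x, ~ repelling abs x -> abs x <= 1.
  by move=> x h; rewrite leNgt; apply/negP.
rewrite /repelling /attracting /indifferent /res_eq.
split.
  case=> h1 [h2 h3]; have := partA Habs r h1 h2; rewrite ltNge (ltW h3) //.
split.
  split; first (by case=> h1 h2; move: (partA Habs r h1 h2)).
  split; first (by case=> h1 h2; move: (partA Habs r132 h1 h2)).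
  by case=> h1 h2; move: (partA Habs r231 h1 h2).
split.
  split.
    case=> h1 [/nr h2 /nr h3]; split; [by move: (partB Habs r h1 h2 h3) | by move: (partB Habs r132 h1 h3 h2)].
  split.
    case=> /nr h1 [h2 /nr h3]; split; [by move: (partB Habs r213 h2 h1 h3) | by move: (partB Habs r231 h2 h3 h1)].
  case=> /nr h1 [/nr h2 h3]; split; [by move: (partB Habs r312 h3 h1 h2) | by move: (partB Habs r321 h3 h2 h1)].
case=> /nr h1 [/nr h2 /nr h3].
case: (boolP (abs (l1 * l2 - 1) < 1)) => e12; last by left; left; apply/negP.
case: (boolP (abs (l1 * l3 - 1) < 1)) => e13; last by left; right; left; apply/negP.
case: (boolP (abs (l2 * l3 - 1) < 1)) => e23; last by left; right; right; apply/negP.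
by right; case: (partC Habs r h1 h2 h3 e12 e13 e23).
Qed.
Theorem lemma3p3 (R : realType) (K : closedFieldType) (abs : K -> R)
  (Habs : nonarch_abs abs) (Hcompl : abs_complete abs)
  (p q : {poly K}) (Hdeg : rat_degree2 p q)
  (x1 x2 x3 : option K)
  (Hf1 : is_fixed p q x1) (Hf2 : is_fixed p q x2) (Hf3 : is_fixed p q x3)
  (H12 : x1 <> x2) (H13 : x1 <> x3) (H23 : x2 <> x3) :
  let l1 := multiplier p q x1 in
  let l2 := multiplier p q x2 in
  let l3 := multiplier p q x3 in
  ~ (repelling abs l1 /\ repelling abs l2 /\ repelling abs l3)
  /\ (* (A) *)
  ((repelling abs l1 /\ repelling abs l2 -> attracting abs l3) /\
   (repelling abs l1 /\ repelling abs l3 -> attracting abs l2) /\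
   (repelling abs l2 /\ repelling abs l3 -> attracting abs l1))
  /\ (* (B) *)
  ((repelling abs l1 /\ ~ repelling abs l2 /\ ~ repelling abs l3 ->
      indifferent abs l2 /\ indifferent abs l3) /\
   (~ repelling abs l1 /\ repelling abs l2 /\ ~ repelling abs l3 ->
      indifferent abs l1 /\ indifferent abs l3) /\
   (~ repelling abs l1 /\ ~ repelling abs l2 /\ repelling abs l3 ->
      indifferent abs l1 /\ indifferent abs l2))
  /\ (* (C) *)
  (~ repelling abs l1 /\ ~ repelling abs l2 /\ ~ repelling abs l3 ->
     (~ res_eq abs (l1 * l2) 1 \/ ~ res_eq abs (l1 * l3) 1 \/
      ~ res_eq abs (l2 * l3) 1)
     \/ (res_eq abs l1 1 /\ res_eq abs l2 1 /\ res_eq abs l3 1)).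
Proof.
have hr : relK (multiplier p q x1) (multiplier p q x2) (multiplier p q x3).
  have [hp hq] : (size p <= 3)%N /\ (size q <= 3)%N.
    by case: Hdeg => _ hm; rewrite -hm leq_maxl leq_maxr.
  have nq : forall (a b : K), Some a <> Some b -> a != b.
    by move=> a b H; apply/eqP => e; apply: H; rewrite e.
  case: x1 Hf1 H12 H13 => [a|] Hf1 H12 H13;
  case: x2 Hf2 H12 H23 => [b|] Hf2 H12 H23;
  case: x3 Hf3 H13 H23 => [d|] Hf3 H13 H23 //=.
  - exact: rel_fin hp hq (nq _ _ H12) (nq _ _ H13) (nq _ _ H23) Hf1 Hf2 Hf3.
  - exact: rel_inf Hdeg (nq _ _ H12) Hf1 Hf2 Hf3.
  - apply: relK_23; exact: rel_inf Hdeg (nq _ _ H13) Hf1 Hf3 Hf2.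
  - apply: relK_12; apply: relK_23; exact: rel_inf Hdeg (nq _ _ H23) Hf2 Hf3 Hf1.
move=> l1 l2 l3; by move: (key Habs hr).
Qed.
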